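(* Let $\mathcal S$ be a critical poset, with $a$, $\mathcal S_a$, $\mathcal V_\lambda(\mathcal S)=(V^{\mathcal S};V^{\mathcal S}_i)_{i\in\mathcal S}$ and $\mathcal V(\mathcal S_a)=(V^{\mathcal S};V^{\mathcal S}_i)_{i\in\mathcal S_a}$ as in the context, and write $V^{\mathcal S}_\lambda$ for the subspace at $a$. Let $\chi^a=(\chi^a_i)_{i\in\mathcal S_a}\in\mathbb R_+^{|\mathcal S_a|}$ be a weight such that $\mathcal V(\mathcal S_a)$ is $\chi^a$-stable, let $R=\min\{\dim M-\sum_{i\in\mathcal S_a}\chi^a_i\dim(V^{\mathcal S}_i\cap M): M \text{ a proper subspace of } V^{\mathcal S}\}$, let $0<\varepsilon<R$, $T=1+(R-\varepsilon)\dim V^{\mathcal S}_\lambda/\dim V^{\mathcal S}$, and define $\chi^{\mathcal S}_i=\chi^a_iT^{-1}$ for $i\in\mathcal S_a$ and $\chi^{\mathcal S}_a=(R-\varepsilon)T^{-1}$. Then $\mathcal V_\lambda(\mathcal S)$ is $\chi^{\mathcal S}$-stable for every $\lambda\in\mathbb C$.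
   Context: The critical posets are $(1,1,1,1),(2,2,2),(1,3,3),(1,2,5),(N,4)$, where $(t_1,\dots,t_s)$ is the disjoint union of incomparable chains of sizes $t_i$, $N$ has elements $a_1,a_2,b_1,b_2$ with exactly $a_1\prec b_1,a_2\prec b_1,a_2\prec b_2$, and $(N,4)$ is the disjoint union of $N$ and a 4-chain. A subspace representation $(V;V_i)_{i\in\mathcal P}$ of a poset $\mathcal P$ consists of a finite-dimensional complex space $V$ and subspaces with $V_i\subseteq V_j$ when $i\prec j$. For $\chi\in\mathbb R_+^{|\mathcal P|}$ it is $\chi$-stable if $\sum_i\chi_i\dim V_i=\dim V$ and $\sum_i\chi_i\dim(V_i\cap M)<\dim M$ for every subspace $0\neq M\subsetneq V$. With $e_i$ standard basis vectors, $e_{i_1\dots i_k}=e_{i_1}+\dots+e_{i_k}$, $\langle\cdots\rangle$ span, define $\mathcal V_\lambda(\mathcal S)$, $\lambda\in\mathbb C$ (chains bottom to top): $(1,1,1,1)$: $\mathbb C^2$; $\langle e_1\rangle,\langle e_2\rangle,\langle e_1+e_2\rangle,\langle e_1+\lambda e_2\rangle$. $(2,2,2)$: $\mathbb C^3$; $\langle e_{123}\rangle\subset\langle e_{123},e_1+\lambda e_3\rangle$; $\langle e_1\rangle\subset\langle e_1,e_2\rangle$; $\langle e_3\rangle\subset\langle e_2,e_3\rangle$. $(1,3,3)$: $\mathbb C^4$; $\langle e_{123},e_{24}\rangle$; $\langle e_4\rangle\subset\langle e_1,e_4\rangle\subset\langle e_1,e_4,e_2+\lambda e_3\rangle$; $\langle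 e_3\rangle\subset\langle e_2,e_3\rangle\subset\langle e_1,e_2,e_3\rangle$. $(1,2,5)$: $\mathbb C^6$; $\langle e_{123},e_{245},e_{16}\rangle$; $\langle e_5,e_6\rangle\subset\langle e_1,e_2,e_5,e_6\rangle$; $\langle e_4\rangle\subset\langle e_3,e_4\rangle\subset\langle e_2,e_3,e_4\rangle\subset\langle e_1,e_2,e_3,e_4\rangle\subset\langle e_1,e_2,e_3,e_4,e_5+\lambda e_6\rangle$. $(N,4)$: $\mathbb C^5$; 4-chain $\langle e_4\rangle\subset\langle e_3,e_4\rangle\subset\langle e_2,e_3,e_4\rangle\subset\langle e_1,e_2,e_3,e_4\rangle$; $a_1\mapsto\langle e_{235},e_{134}\rangle$, $a_2\mapsto\langle e_5\rangle$, $b_1\mapsto\langle e_{235},e_{134},e_5,e_3+\lambda e_4\rangle$, $b_2\mapsto\langle e_1,e_2,e_5\rangle$. $a\in\mathcal S$ is the unique element whose subspace depends on $\lambda$; $\mathcal S_a=\mathcal S\setminus\{a\}$; $\mathcal V(\mathcal S_a)$ is $\mathcal V_\lambda(\mathcal S)$ with the subspace at $a$ deleted. *)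

(* Defs.v *)
From HB Require Import structures.
From mathcomp Require Import all_boot all_order all_algebra.
From mathcomp Require Import complex.
From mathcomp Require Import reals.
Set Implicit Arguments. Unset Strict Implicit. Unset Printing Implicit Defensive.
Import Order.TTheory GRing.Theory Num.Theory.
Local Open Scope ring_scope.

Section CriticalPosets.
Variable R : realType.
Local Notation C := (complex R).

(* Generic notions.  A subspace representation with ambient space     *)
(* V = C^n (row vectors 'rV_n) assigns to each element of a finite    *)
(* poset P a subspace of C^n, represented (mxalgebra style) by a      *)
(* square matrix whose row space is the subspace.                    *)

Definition spanv n (vs : seq 'rV[C]_n) : 'M[C]_n :=
  <<\matrix_(i < size vs, j < n) (nth 0 vs i) 0 j>>%MS.

(* The weight
   chi lives in R_+^{|D|}, i.e. chi_i > 0 for i in D (its values outside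
   D are irrelevant).  Subspaces M of C^n are row spaces of arbitrary
   matrices M : 'M_(k, n); dim M = \rank M. *)
Definition stable_on (P : finType) (D : pred P) n
    (U : P -> 'M[C]_n) (chi : P -> R) : Prop :=
  [/\ forall i, D i -> 0 < chi i,
      \sum_(i | D i) chi i * (\rank (U i))%:R = n%:R
    & forall k (M : 'M[C]_(k, n)), (0 < \rank M)%N -> (\rank M < n)%N ->
        \sum_(i | D i) chi i * (\rank (U i :&: M)%MS)%:R < (\rank M)%:R ].

Definition defect_min (P : finType) (D : pred P) n
    (U : P -> 'M[C]_n) (chi : P -> R) (r : R) : Prop :=
  (exists k (M : 'M[C]_(k, n)), [/\ (0 < \rank M)%N, (\rank M < n)%N &
      r = (\rank M)%:R - \sum_(i | D i) chi i * (\rank (U i :&: M)%MS)%:R])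
  /\ (forall k (M : 'M[C]_(k, n)), (0 < \rank M)%N -> (\rank M < n)%N ->
      r <= (\rank M)%:R - \sum_(i | D i) chi i * (\rank (U i :&: M)%MS)%:R).

Inductive critical := P1111 | P222 | P133 | P125 | PN4.

Definition csize (S : critical) : nat :=
  match S with P1111 => 4 | P222 => 6 | P133 => 7 | P125 => 8 | PN4 => 8 end.

Definition cdim (S : critical) : nat :=
  match S with P1111 => 2 | P222 => 3 | P133 => 4 | P125 => 6 | PN4 => 5 end.

(* Elements are numbered 0 .. |S|-1 as follows:
   (1,1,1,1): 0 | 1 | 2 | 3                      (a = 3)
   (2,2,2)  : 0<1 | 2<3 | 4<5                    (a = 1)
   (1,3,3)  : 0 | 1<2<3 | 4<5<6                  (a = 3)
   (1,2,5)  : 0 | 1<2 | 3<4<5<6<7                (a = 7)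
   (N,4)    : 0<1<2<3 | a1=4, a2=5, b1=6, b2=7 with 4<6, 5<6, 5<7  (a = 6) *)

(* strict order relation (transitively closed list of pairs) *)
Definition clt_pairs (S : critical) : seq (nat * nat) :=
  match S with
  | P1111 => [::]
  | P222 => [:: (0,1); (2,3); (4,5)]
  | P133 => [:: (1,2); (1,3); (2,3); (4,5); (4,6); (5,6)]
  | P125 => [:: (1,2); (3,4); (3,5); (3,6); (3,7); (4,5); (4,6); (4,7);
                (5,6); (5,7); (6,7)]
  | PN4 => [:: (0,1); (0,2); (0,3); (1,2); (1,3); (2,3); (4,6); (5,6); (5,7)]
  end.

Definition cle (S : critical) : rel 'I_(csize S) :=
  fun i j => (i == j) || ((nat_of_ord i, nat_of_ord j) \in clt_pairs S).

Definition ca (S : critical) : 'I_(csize S) :=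
  match S return 'I_(csize S) with
  | P1111 => @Ordinal 4 3 isT
  | P222 => @Ordinal 6 1 isT
  | P133 => @Ordinal 7 3 isT
  | P125 => @Ordinal 8 7 isT
  | PN4 => @Ordinal 8 6 isT
  end.

(* standard basis vector e_i of C^(n+1), 1-based *)
Definition ev {n} (i : nat) : 'rV[C]_n.+1 := delta_mx 0 (inord i.-1).

Definition cgens (S : critical) (lam : C) : seq (seq 'rV[C]_(cdim S)) :=
  match S return seq (seq 'rV[C]_(cdim S)) with
  | P1111 =>
      [:: [:: ev 1]; [:: ev 2]; [:: ev 1 + ev 2]; [:: ev 1 + lam *: ev 2]]
  | P222 =>
      let e123 := ev 1 + ev 2 + ev 3 in
      [:: [:: e123]; [:: e123; ev 1 + lam *: ev 3];
          [:: ev 1]; [:: ev 1; ev 2];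
          [:: ev 3]; [:: ev 2; ev 3]]
  | P133 =>
      let e123 := ev 1 + ev 2 + ev 3 in
      let e24 := ev 2 + ev 4 in
      [:: [:: e123; e24];
          [:: ev 4]; [:: ev 1; ev 4]; [:: ev 1; ev 4; ev 2 + lam *: ev 3];
          [:: ev 3]; [:: ev 2; ev 3]; [:: ev 1; ev 2; ev 3]]
  | P125 =>
      let e123 := ev 1 + ev 2 + ev 3 in
      let e245 := ev 2 + ev 4 + ev 5 in
      let e16 := ev 1 + ev 6 in
      [:: [:: e123; e245; e16];
          [:: ev 5; ev 6]; [:: ev 1; ev 2; ev 5; ev 6];
          [:: ev 4]; [:: ev 3; ev 4]; [:: ev 2; ev 3; ev 4];
          [:: ev 1; ev 2; ev 3; ev 4];
          [:: ev 1; ev 2; ev 3; ev 4; ev 5 + lam *: ev 6]]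
  | PN4 =>
      let e235 := ev 2 + ev 3 + ev 5 in
      let e134 := ev 1 + ev 3 + ev 4 in
      [:: [:: ev 4]; [:: ev 3; ev 4]; [:: ev 2; ev 3; ev 4];
          [:: ev 1; ev 2; ev 3; ev 4];
          [:: e235; e134]; [:: ev 5];
          [:: e235; e134; ev 5; ev 3 + lam *: ev 4];
          [:: ev 1; ev 2; ev 5]]
  end.

Definition cV (S : critical) (lam : C) (i : 'I_(csize S)) : 'M[C]_(cdim S) :=
  spanv (nth [::] (cgens S lam) i).

End CriticalPosets.
Arguments cV {R} S lam i.
Arguments cgens {R} S lam.

(* Main.v *)
Set Warnings "-notation-overridden,-ambiguous-paths,-deprecated".
Require Import Defs.
From HB Require Import structures.
From mathcomp Require Import all_boot all_order all_algebra.
From mathcomp Require Import complex.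
From mathcomp Require Import reals.
From mathcomp Require Import ring lra.
Import Order.TTheory GRing.Theory Num.Theory.
Local Open Scope ring_scope.

Lemma rank_inv (F : fieldType) k n (A : 'M[F]_(k,n)) (B : 'M[F]_(n,k)) :
  A *m B = 1%:M -> (k <= \rank A)%N.
Proof. by move=> H; rewrite -{1}(mxrank1 F k) -H mxrankM_maxl. Qed.

Lemma eq_inord n (i : 'I_n.+1) k : (k <= n)%N -> (i == inord k) = (val i == k).
Proof. by move=> hk; rewrite -val_eqE /= inordK. Qed.

Ltac crunch := apply/matrixP => [[[|[|[|[|[|[|?]]]]]] ?] [[|[|[|[|[|[|?]]]]]] ?]] //;
  rewrite !mxE !big_ord_recr big_ord0 /= /ev !mxE /= ?eq_inord //= ; ring.

Lemma rank_a (R : realType) S lam : ((cdim S).-1 <= \rank (@cV R S lam (ca S)))%N.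
Proof.
case: S; rewrite /cV /spanv genmxE /=.
- apply: (@rank_inv _ _ _ _ (\matrix_(i < 2, j < 1) (if (i : nat) == 0%N then 1 else 0))).
  crunch.
- apply: (@rank_inv _ _ _ _ (\matrix_(i < 3, j < 2)
     match (i : nat), (j : nat) with 1, 0 => 1 | 0, 1 => 1 | 1, 1 => -1 | _, _ => 0 end)).
  crunch.
- apply: (@rank_inv _ _ _ _ (\matrix_(i < 4, j < 3)
     match (i : nat), (j : nat) with 0, 0 => 1 | 3, 1 => 1 | 1, 2 => 1 | _, _ => 0 end)).
  crunch.
- apply: (@rank_inv _ _ _ _ (\matrix_(i < 6, j < 5)
     if (i : nat) == j then 1 else 0)).
  crunch.
- apply: (@rank_inv _ _ _ _ (\matrix_(i < 5, j < 4)
     match (i : nat), (j : nat) with 1, 0 => 1 | 0, 1 => 1 | 4, 2 => 1 | 1, 2 => -1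
       | 2, 3 => 1 | 1, 3 => -1 | 0, 3 => -1 | _, _ => 0 end)).
  crunch.
Qed.

Theorem proposition2 (R : realType) (S : critical) (chia : 'I_(csize S) -> R)
    (Rm eps : R) (lam : complex R) :
  stable_on (predC1 (ca S)) (cV S lam) chia ->
  defect_min (predC1 (ca S)) (cV S lam) chia Rm ->
  0 < eps -> eps < Rm ->
  let T := 1 + (Rm - eps) * (\rank (cV S lam (ca S)))%:R / (cdim S)%:R in
  let chiS := fun i => if i == ca S then (Rm - eps) / T else chia i / T in
  stable_on predT (cV S lam) chiS.
Proof.
move=> [pos sumeq _] [_ hmin] he heR T chiS.
set a := ca S; set n := cdim S; set d := \rank (cV S lam a).
have n0 : (0 < n)%N by rewrite /n; clear; case: S.
have hd : ((n.-1) <= d)%N by apply: rank_a.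
have nR0 : 0 < n%:R :> R by rewrite ltr0n.
have dge : n%:R <= d%:R + 1 :> R.
  by rewrite natr1 ler_nat -(prednK n0) ltnS.
have d0 : 0 <= d%:R :> R by rewrite ler0n.
have rpos : 0 < Rm - eps by rewrite subr_gt0.
have Tpos : 0 < T by rewrite /T; apply: ltr_wpDr => //; apply: divr_ge0;
  [apply: mulr_ge0 => //; apply: ltW | apply: ltW].
have hTn : T * n%:R = n%:R + (Rm - eps) * d%:R.
  by rewrite /T mulrDl mul1r -mulrA mulVf ?mulr1 // gt_eqF.
have split_sum : forall f : 'I_(csize S) -> nat,
  \sum_(i | predT i) chiS i * (f i)%:R =
  (Rm - eps) / T * (f a)%:R + (\sum_(i | predC1 a i) chia i * (f i)%:R) / T.
  move=> f; rewrite (bigD1 a) //= /chiS eqxx; congr (_ + _).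
  rewrite big_distrl; apply: eq_big => //= i hi.
  by rewrite (negbTE hi) mulrAC.
split.
- move=> i _; rewrite /chiS; case: ifP => [_|/negbT hi]; apply: divr_gt0 => //.
  exact: pos.
- rewrite split_sum sumeq.
  rewrite -mulrA (mulrC _ d%:R) mulrA -mulrDl addrC -hTn.
  by rewrite mulrC mulKf ?gt_eqF.
- move=> k M hM0 hMn.
  rewrite split_sum.
  set s := \sum_(i | _) _.
  set dM := \rank (cV S lam a :&: M)%MS.
  set m := \rank M.
  have hs := hmin k M hM0 hMn; rewrite -/s -/m in hs.
  have hdM : dM%:R <= m%:R :> R by rewrite ler_nat /dM /m mxrankS // capmxSr.
  have hmn : m%:R + 1 <= n%:R :> R by rewrite natr1 ler_nat.
  have dM0 : 0 <= dM%:R :> R by rewrite ler0n.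
  have m0 : 0 <= m%:R :> R by rewrite ler0n.
  rewrite -mulrA (mulrC _ dM%:R) mulrA -mulrDl ltr_pdivrMr //.
  rewrite -(ltr_pM2r nR0) -mulrA hTn.
  have h1 : n%:R * (s - (m%:R - Rm)) <= 0.
    by rewrite pmulr_rle0 // subr_le0 lerBrDl -lerBrDr.
  have h2 : (Rm - eps) * (dM%:R - m%:R) * n%:R <= 0.
    rewrite pmulr_lle0 // pmulr_rle0 // subr_le0 //.
  have h3 : 0 <= (Rm - eps) * m%:R * (d%:R + 1 - n%:R).
    by apply: mulr_ge0; [apply: mulr_ge0; [apply: ltW|] | rewrite subr_ge0].
  have h4 : 0 < (n%:R - m%:R) * Rm.
    by apply: mulr_gt0; [rewrite subr_gt0; apply: lt_le_trans hmn; rewrite ltrDl | apply: lt_trans heR].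
  have h5 : 0 <= eps * m%:R by apply: mulr_ge0 => //; apply: ltW.
  nra.
Qed.
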